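(* Consider the two-individual system under (h1), (h2), (h3), and suppose $M>0$. Then both individuals act infinitely (countably) many times after any fixed time $t_{start}\ge0$; that is, the system is in the full action state.
   Context: Two-individual model ($n=2$): parameters $\sigma_A,\sigma_S\ge 0$, $\sigma_C>0$, $\mu_S\in[0,1]$, $\mu_C>0$, $r>0$, $\tau\in(0,1)$, $\alpha_1,\alpha_2\in(-1,1)$. States $x_i\in(-1,1)$, $y_i\in[0,1]$, with $\gamma_1=y_2$, $\gamma_2=y_1$. Between action events: $\dot x_i=[\sigma_A\alpha_i+\sigma_S(\gamma_i-\mu_S)]\,\sigma_C(\gamma_i+\mu_C)(1-x_i)(1+x_i)$, $\dot y_i=-ry_i$. Individual $i$ ''acts'' at time $t$ when $x_i(t)$ reaches $\tau$; immediately afterwards $x_i$ is reset to $0$ and $y_i$ to $1$, and evolution resumes. Hypotheses: (h1) $\sigma_A\alpha_1-\sigma_S\mu_S>0$; (h2) $\sigma_A\alpha_2-\sigma_S\mu_S\le0$; (h3) $x_1(0)=y_1(0)=y_2(0)=0$ and $x_2(0)\in(-1,\tau)$. Constants: $A_1=(\sigma_A\alpha_1-\sigma_S\mu_S)\sigma_C\mu_C$, $T=\tanh^{-1}(\tau)/A_1$, $A=(\sigma_A\alpha_2-\sigma_S\mu_S)\sigma_C\mu_C$, $B=-\frac1r\big[(\sigma_A\alpha_2-\sigma_S\mu_S)\sigma_C+\sigma_S\sigma_C\mu_C\big]$, $C=-\frac{\sigma_S\sigma_C}{2r}$, $M=AT+Be^{-rT}+Ce^{-2rT}-B-C$. *)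

(* Defs.v *)
From Stdlib Require Import Reals List.
From Coquelicot Require Import Coquelicot.
Open Scope R_scope.

Definition atanh (x : R) : R := / 2 * ln ((1 + x) / (1 - x)).

Record params := Params {
  sA : R; sS : R; sC : R; muS : R; muC : R; rr : R; tau : R;
  al1 : R; al2 : R }.

Definition valid_params (p : params) : Prop :=
  0 <= sA p /\ 0 <= sS p /\ 0 < sC p /\ 0 <= muS p <= 1 /\ 0 < muC p /\
  0 < rr p /\ 0 < tau p < 1 /\ -1 < al1 p < 1 /\ -1 < al2 p < 1.

(** Right-hand side of the opinion equation for individual with bias
    [alpha], perceived signal [gamma] and state [x]. *)
Definition xrhs (p : params) (alpha gamma x : R) : R :=
  (sA p * alpha + sS p * (gamma - muS p)) * sC p * (gamma + muC p)
  * (1 - x) * (1 + x).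

Definition A1c (p : params) := (sA p * al1 p - sS p * muS p) * sC p * muC p.
Definition Tc (p : params) := atanh (tau p) / A1c p.
Definition Ac (p : params) := (sA p * al2 p - sS p * muS p) * sC p * muC p.
Definition Bc (p : params) :=
  - / rr p * ((sA p * al2 p - sS p * muS p) * sC p + sS p * sC p * muC p).
Definition Cc (p : params) := - (sS p * sC p) / (2 * rr p).
Definition Mc (p : params) :=
  Ac p * Tc p + Bc p * exp (- rr p * Tc p) + Cc p * exp (- 2 * rr p * Tc p)
  - Bc p - Cc p.

Definition finite_set (E : R -> Prop) : Prop :=
  exists l : list R, forall t, E t -> In t l.

(** Solution of the hybrid two-individual system on [0, +oo).
    [x1 x2 y1 y2] are the (right-continuous) state trajectories; [E1], [E2]
    are the sets of action times of individuals 1 and 2.  The value at an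
    action time is the post-reset value.  gamma_1 = y2, gamma_2 = y1. *)
Definition is_solution (p : params) (x1 x2 y1 y2 : R -> R)
    (E1 E2 : R -> Prop) : Prop :=
  (forall t, E1 t -> 0 < t) /\ (forall t, E2 t -> 0 < t) /\
  (forall T, finite_set (fun t => E1 t /\ t <= T)) /\
  (forall T, finite_set (fun t => E2 t /\ t <= T)) /\
  (forall t, 0 <= t -> -1 < x1 t < tau p /\ -1 < x2 t < tau p) /\
  (forall t, 0 <= t -> 0 <= y1 t <= 1 /\ 0 <= y2 t <= 1) /\
  (forall t, 0 < t -> ~ E1 t -> ~ E2 t ->
     is_derive x1 t (xrhs p (al1 p) (y2 t) (x1 t)) /\
     is_derive x2 t (xrhs p (al2 p) (y1 t) (x2 t)) /\
     is_derive y1 t (- rr p * y1 t) /\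
     is_derive y2 t (- rr p * y2 t)) /\
  (forall t, 0 < t -> ~ E1 t -> continuous x1 t /\ continuous y1 t) /\
  (forall t, 0 < t -> ~ E2 t -> continuous x2 t /\ continuous y2 t) /\
  (forall t, 0 <= t ->
     filterlim x1 (at_right t) (locally (x1 t)) /\
     filterlim x2 (at_right t) (locally (x2 t)) /\
     filterlim y1 (at_right t) (locally (y1 t)) /\
     filterlim y2 (at_right t) (locally (y2 t))) /\
  (forall t, E1 t ->
     filterlim x1 (at_left t) (locally (tau p)) /\ x1 t = 0 /\ y1 t = 1) /\
  (forall t, E2 t ->
     filterlim x2 (at_left t) (locally (tau p)) /\ x2 t = 0 /\ y2 t = 1).

(* Main.v *)
Require Import Defs.
From Stdlib Require Import Reals List Lra Lia Classical.
From Coquelicot Require Import Coquelicot.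
Open Scope R_scope.

Lemma base_mono (h df : R -> R) u v :
  u < v ->
  (forall z, u <= z <= v -> continuity_pt h z) ->
  (forall z, u < z < v -> is_derive h z (df z) /\ 0 <= df z) ->
  h u <= h v.
Proof.
  intros Huv Hc Hd.
  assert (pr1 : forall c, u < c < v -> derivable_pt h c).
  { intros c Hc'. exists (df c). apply is_derive_Reals. apply (Hd c Hc'). }
  assert (pr2 : forall c, u < c < v -> derivable_pt id c).
  { intros c _. apply derivable_pt_id. }
  destruct (MVT h id u v pr1 pr2 Huv Hc) as [c [P Heq]].
  { intros; apply derivable_continuous_pt, derivable_pt_id. }
  assert (E2 : derive_pt id c (pr2 c P) = 1).
  { apply derive_pt_eq_0. apply derivable_pt_lim_id. }
  rewrite E2 in Heq.
  assert (E : derive_pt h c (pr1 c P) = df c).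
  { apply derive_pt_eq_0. apply is_derive_Reals. apply (Hd c P). }
  rewrite E in Heq. unfold id in Heq.
  destruct (Hd c P) as [_ H0]. nra.
Qed.

Lemma core_mono (h df : R -> R) : forall n (l : list R), (length l <= n)%nat ->
  forall u v, u <= v ->
  (forall z, u <= z <= v -> continuity_pt h z) ->
  (forall z, u < z < v -> ~ In z l -> is_derive h z (df z) /\ 0 <= df z) ->
  h u <= h v.
Proof.
  induction n as [|n IH]; intros l Hl u v Huv Hc Hd.
  - destruct l; [|simpl in Hl; lia].
    destruct (Req_dec u v) as [->|Hne]; [lra|].
    apply (base_mono h df); [lra|exact Hc|]. intros z Hz. apply Hd; auto.
  - destruct (classic (exists w, u < w < v /\ In w l)) as [[w [Hw Hwl]]|Hno].
    + pose (l' := remove Req_EM_T w l).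
      assert (Hl' : (length l' <= n)%nat).
      { pose proof (remove_length_lt Req_EM_T l w Hwl). unfold l'. lia. }
      apply Rle_trans with (h w).
      * apply (IH l' Hl' u w); [lra| intros; apply Hc; lra|].
        intros z Hz Hzn. apply Hd; [lra|]. intro Hin. apply Hzn.
        apply in_in_remove; [lra|exact Hin].
      * apply (IH l' Hl' w v); [lra| intros; apply Hc; lra|].
        intros z Hz Hzn. apply Hd; [lra|]. intro Hin. apply Hzn.
        apply in_in_remove; [lra|exact Hin].
    + destruct (Req_dec u v) as [->|Hne]; [lra|].
      apply (base_mono h df); [lra|exact Hc|]. intros z Hz. apply Hd; auto.
      intro Hin. apply Hno. exists z. auto.
Qed.
Lemma ballR x e y : ball x e y <-> Rabs (y - x) < e.
Proof. reflexivity. Qed.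
Lemma right_pt (h : R -> R) a L (eps : posreal) : filterlim h (at_right a) (locally L) ->
  exists d : posreal, forall y, a < y < a + d -> Rabs (h y - L) < eps.
Proof.
  intros H. apply filterlim_locally with (eps := eps) in H.
  destruct H as [d Hd]. exists d. intros y Hy. apply Hd; [|lra].
  apply ballR. rewrite Rabs_pos_eq; lra.
Qed.
Lemma left_pt (h : R -> R) a L (eps : posreal) : filterlim h (at_left a) (locally L) ->
  exists d : posreal, forall y, a - d < y < a -> Rabs (h y - L) < eps.
Proof.
  intros H. apply filterlim_locally with (eps := eps) in H.
  destruct H as [d Hd]. exists d. intros y Hy. apply Hd; [|lra].
  apply ballR. rewrite Rabs_left; lra.
Qed.
Lemma mono (h df : R -> R) (l : list R) a b : a < b ->
  filterlim h (at_right a) (locally (h a)) ->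
  filterlim h (at_left b) (locally (h b)) ->
  (forall z, a < z < b -> continuity_pt h z) ->
  (forall z, a < z < b -> ~ In z l -> is_derive h z (df z) /\ 0 <= df z) ->
  h a <= h b.
Proof.
  intros Hab Hr Hl Hc Hd.
  assert (core : forall u v, a < u -> u <= v -> v < b -> h u <= h v).
  { intros u v H1 H2 H3. apply (core_mono h df (length l) l (le_n _) u v); try lra.
    - intros; apply Hc; lra.
    - intros; apply Hd; auto; lra. }
  assert (S1 : forall v, a < v < b -> h a <= h v).
  { intros v Hv. destruct (Rle_or_lt (h a) (h v)) as [|Hlt]; [auto|].
    assert (He : 0 < h a - h v) by lra.
    destruct (right_pt h a (h a) (mkposreal _ He) Hr) as [d Hd'].
    set (y := a + Rmin d (v - a) / 2).
    assert (Hm1 : Rmin d (v - a) <= d) by apply Rmin_l.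
    assert (Hm2 : Rmin d (v - a) <= v - a) by apply Rmin_r.
    assert (Hm3 : 0 < Rmin d (v - a)) by (apply Rmin_pos; [apply cond_pos|lra]).
    specialize (Hd' y ltac:(unfold y; lra)). simpl in Hd'.
    specialize (core y v ltac:(unfold y; lra) ltac:(unfold y; lra) ltac:(lra)).
    apply Rabs_lt_between in Hd'. lra. }
  destruct (Rle_or_lt (h a) (h b)) as [|Hlt]; [auto|].
  assert (He : 0 < h a - h b) by lra.
  destruct (left_pt h b (h b) (mkposreal _ He) Hl) as [d Hd'].
  set (y := b - Rmin d (b - a) / 2).
  assert (Hm1 : Rmin d (b - a) <= d) by apply Rmin_l.
  assert (Hm2 : Rmin d (b - a) <= b - a) by apply Rmin_r.
  assert (Hm3 : 0 < Rmin d (b - a)) by (apply Rmin_pos; [apply cond_pos|lra]).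
  specialize (Hd' y ltac:(unfold y; lra)). simpl in Hd'.
  specialize (S1 y ltac:(unfold y; lra)).
  apply Rabs_lt_between in Hd'. lra.
Qed.
Lemma atanh_derive x : -1 < x < 1 -> is_derive atanh x (/ ((1 - x) * (1 + x))).
Proof.
  intros Hx. unfold atanh. auto_derive.
  - split; [lra|split; [|exact I]]. apply Rmult_lt_0_compat; [lra|apply Rinv_0_lt_compat; lra].
  - field. lra.
Qed.
Lemma atanh_cont x : -1 < x < 1 -> continuity_pt atanh x.
Proof. intros Hx. apply derivable_continuous_pt. exists (/ ((1 - x) * (1 + x))).
  apply is_derive_Reals, atanh_derive, Hx. Qed.
Lemma atanh_lt x y : -1 < x -> x < y -> y < 1 -> atanh x < atanh y.
Proof.
  intros. unfold atanh. apply Rmult_lt_compat_l; [lra|]. apply ln_increasing.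
  apply Rdiv_lt_0_compat; lra.
  apply Rminus_gt_0_lt. unfold Rdiv. replace ((1 + y) * / (1 - y) - (1 + x) * / (1 - x))
   with (2 * (y - x) / ((1-x)*(1-y))) by (field; lra).
  apply Rdiv_lt_0_compat; [lra|]. apply Rmult_lt_0_compat; lra.
Qed.
Lemma atanh_0 : atanh 0 = 0.
Proof. unfold atanh. replace ((1+0)/(1-0)) with 1 by field. rewrite ln_1. ring. Qed.
Lemma atanh_pos x : 0 < x < 1 -> 0 < atanh x.
Proof. intros. rewrite <- atanh_0. apply atanh_lt; lra. Qed.

Lemma lim_comp_cont {T} (F : (T -> Prop) -> Prop) {FF : Filter F} (f : R -> R) g x :
  filterlim g F (locally x) -> continuity_pt f x -> filterlim (fun t => f (g t)) F (locally (f x)).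
Proof. intros Hg Hf. eapply filterlim_comp; [exact Hg|]. apply continuity_pt_filterlim, Hf. Qed.
Lemma lim_minus {T} (F : (T -> Prop) -> Prop) {FF : Filter F} (f g : T -> R) a b :
  filterlim f F (locally a) -> filterlim g F (locally b) ->
  filterlim (fun t => f t - g t) F (locally (a - b)).
Proof.
  intros Hf Hg. apply filterlim_locally. intros eps.
  assert (He : 0 < eps / 2) by (generalize (cond_pos eps); lra).
  pose proof (proj1 (filterlim_locally f a) Hf (mkposreal _ He)) as H1.
  pose proof (proj1 (filterlim_locally g b) Hg (mkposreal _ He)) as H2.
  generalize (filter_and _ _ H1 H2). apply filter_imp. intros x [B1 B2].
  change (Rabs (f x - g x - (a - b)) < eps).
  change (Rabs (f x - a) < eps / 2) in B1. change (Rabs (g x - b) < eps / 2) in B2.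
  apply Rabs_lt_between in B1. apply Rabs_lt_between in B2. apply Rabs_lt_between. lra.
Qed.
Lemma lim_mult {T} (F : (T -> Prop) -> Prop) {FF : Filter F} (f g : T -> R) a b :
  filterlim f F (locally a) -> filterlim g F (locally b) ->
  filterlim (fun t => f t * g t) F (locally (a * b)).
Proof.
  intros Hf Hg.
  apply (filterlim_comp_2 f g (fun u v => mult u v) Hf Hg).
  apply (@filterlim_mult R_AbsRing a b).
Qed.
Lemma lim_right_cont (f : R -> R) x : continuity_pt f x -> filterlim f (at_right x) (locally (f x)).
Proof. intros H. eapply filterlim_filter_le_1. apply filter_le_within. apply continuity_pt_filterlim, H. Qed.
Lemma lim_left_cont (f : R -> R) x : continuity_pt f x -> filterlim f (at_left x) (locally (f x)).
Proof. intros H. eapply filterlim_filter_le_1. apply filter_le_within. apply continuity_pt_filterlim, H. Qed.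
Lemma cont_of_continuous (f : R -> R) x : continuous f x -> continuity_pt f x.
Proof. intros H. apply continuity_pt_filterlim, H. Qed.
Lemma dminus (f g : R -> R) x a b : is_derive f x a -> is_derive g x b ->
  is_derive (fun t => f t - g t) x (a - b).
Proof. intros H1 H2. exact (is_derive_minus f g x a b H1 H2). Qed.
Lemma dmult (f g : R -> R) x a b : is_derive f x a -> is_derive g x b ->
  is_derive (fun t => f t * g t) x (a * g x + f x * b).
Proof. intros H1 H2. exact (is_derive_mult f g x a b H1 H2 Rmult_comm). Qed.
Lemma dopp (f : R -> R) x a : is_derive f x a -> is_derive (fun t => - f t) x (- a).
Proof. intros H1. exact (is_derive_opp f x a H1). Qed.
Lemma deq (f : R -> R) x a b : is_derive f x a -> a = b -> is_derive f x b.
Proof. intros H ->; exact H. Qed.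
Lemma dcomp (f g : R -> R) x a b : is_derive f (g x) a -> is_derive g x b ->
  is_derive (fun t => f (g t)) x (b * a).
Proof. intros H1 H2. exact (is_derive_comp f g x a b H1 H2). Qed.
Lemma fin_max : forall (l : list R) (P : R -> Prop), (exists z, P z) ->
  (forall z, P z -> In z l) -> exists p, P p /\ forall z, P z -> z <= p.
Proof.
  induction l as [|a l IH]; intros P [z Hz] Hin.
  - destruct (Hin z Hz).
  - destruct (classic (exists z, P z /\ z <> a)) as [Hex|Hno].
    + destruct (IH (fun z => P z /\ z <> a) Hex) as [q [[Hq Hqa] Hmax]].
      { intros w [Hw Hwa]. destruct (Hin w Hw); [congruence|auto]. }
      destruct (classic (P a)) as [Pa|nPa].
      * destruct (Rle_or_lt a q).
        -- exists q. split; auto. intros w Hw. destruct (Req_dec w a); [subst; auto|].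
           apply Hmax; auto.
        -- exists a. split; auto. intros w Hw. destruct (Req_dec w a); [subst; lra|].
           specialize (Hmax w (conj Hw H0)). lra.
      * exists q. split; auto. intros w Hw. apply Hmax. split; auto. intro; subst; auto.
    + exists z. split; auto. intros w Hw.
      destruct (Req_dec w a); [|exfalso; apply Hno; eauto].
      destruct (Req_dec z a); [subst; lra|exfalso; apply Hno; eauto].
Qed.
Lemma fold_max_ge : forall l t0 x, In x l -> x <= fold_right Rmax t0 l.
Proof. induction l; simpl; intros t0 x H; [destruct H|]. destruct H as [->|H].
  apply Rmax_l. eapply Rle_trans; [apply IHl; eauto|apply Rmax_r]. Qed.
Lemma fold_max_ge0 : forall l t0, t0 <= fold_right Rmax t0 l.
Proof. induction l; simpl; intros; [lra|]. eapply Rle_trans; [apply IHl|apply Rmax_r]. Qed.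

Definition Ff (p : params) (L : R) :=
  Ac p * L + Bc p * exp (- rr p * L) + Cc p * exp (- 2 * rr p * L) - Bc p - Cc p.
Definition Fd (p : params) (L : R) :=
  Ac p - rr p * Bc p * exp (- rr p * L) - 2 * rr p * Cc p * exp (- rr p * L) ^ 2.

Lemma exp2 (r L : R) : exp (- 2 * r * L) = exp (- r * L) ^ 2.
Proof. replace (- 2 * r * L) with (- r * L + - r * L) by ring. rewrite exp_plus. ring. Qed.

Lemma Mc_Ff p : Mc p = Ff p (Tc p).
Proof. reflexivity. Qed.

Lemma Ff_derive p L : is_derive (Ff p) L (Fd p L).
Proof. unfold Ff, Fd. auto_derive; auto. rewrite exp2. ring. Qed.

Lemma Ff_0 p : Ff p 0 = 0.
Proof. unfold Ff. rewrite !Rmult_0_r, exp_0. ring. Qed.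

Lemma Ff_cont p L : continuity_pt (Ff p) L.
Proof. apply derivable_continuous_pt. exists (Fd p L). apply is_derive_Reals, Ff_derive. Qed.

Lemma Fineq p : valid_params p -> sA p * al2 p - sS p * muS p <= 0 ->
  0 < Tc p -> Mc p > 0 ->
  forall L, 0 <= L <= Tc p -> Ff p L >= Mc p / Tc p * L.
Proof.
  intros Hv Ha2 HT HM L HL.
  destruct Hv as (HsA & HsS & HsC & HmuS & HmuC & Hr & Htau & Hal1 & Hal2).
  set (c := Mc p / Tc p).
  assert (Hc : 0 < c) by (unfold c; apply Rdiv_lt_0_compat; lra).
  assert (HA : Ac p <= 0).
  { unfold Ac. assert (0 < sC p * muC p) by (apply Rmult_lt_0_compat; lra). nra. }
  assert (HC : 0 <= - Cc p).
  { unfold Cc. unfold Rdiv. rewrite Ropp_mult_distr_l, Ropp_involutive.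
    apply Rmult_le_pos; [apply Rmult_le_pos; lra|]. left. apply Rinv_0_lt_compat; lra. }
  set (G := fun x => Ff p x - c * x). set (Gd := fun x => Fd p x - c).
  assert (HGd : forall x, is_derive G x (Gd x)).
  { intros x. unfold G, Gd. apply dminus. apply Ff_derive. auto_derive; auto; ring. }
  assert (HGc : forall x, continuity_pt G x).
  { intros x. apply derivable_continuous_pt. exists (Gd x). apply is_derive_Reals, HGd. }
  destruct (Rge_or_lt (Ff p L) (c * L)) as [|Hlt]; [auto|exfalso].
  assert (HG0 : G 0 = 0) by (unfold G; rewrite Ff_0; ring).
  assert (HGT : G (Tc p) = 0) by (unfold G, c; rewrite <- Mc_Ff; field; lra).
  assert (HGL : G L < 0) by (unfold G; lra).
  assert (HL0 : 0 < L) by (destruct (Req_dec L 0) as [->|]; [rewrite HG0 in HGL; lra|lra]).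
  assert (HLT : L < Tc p) by (destruct (Req_dec L (Tc p)) as [->|]; [rewrite HGT in HGL; lra|lra]).
  destruct (MVT_gen G 0 L Gd) as [x1 [Hx1 Heq1]]; [intros; apply HGd|intros; apply HGc|].
  destruct (MVT_gen G L (Tc p) Gd) as [x2 [Hx2 Heq2]]; [intros; apply HGd|intros; apply HGc|].
  rewrite Rmin_left, Rmax_right in Hx1 by lra.
  rewrite Rmin_left, Rmax_right in Hx2 by lra.
  assert (Hd1 : Gd x1 < 0).
  { destruct (Rlt_or_le (Gd x1) 0); auto. assert (0 <= Gd x1 * (L - 0)) by (apply Rmult_le_pos; lra). lra. }
  assert (Hd2 : Gd x2 > 0).
  { destruct (Rlt_or_le 0 (Gd x2)); auto. assert (Gd x2 * (Tc p - L) <= 0).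
    { apply Rmult_le_0_r; lra. } lra. }
  unfold Gd, Fd in Hd1, Hd2.
  set (e1 := exp (- rr p * x1)) in *. set (e2 := exp (- rr p * x2)) in *.
  assert (He1 : 0 < e1) by apply exp_pos. assert (He2 : 0 < e2) by apply exp_pos.
  assert (He12 : e2 <= e1).
  { unfold e1, e2. destruct (Req_dec x1 x2) as [->|]; [lra|]. left. apply exp_increasing. nra. }
  set (lam := e2 / e1).
  assert (Hlam : e2 = lam * e1) by (unfold lam; field; lra).
  assert (Hlam0 : 0 < lam) by (unfold lam; apply Rdiv_lt_0_compat; lra).
  assert (Hlam1 : lam <= 1).
  { unfold lam. apply Rmult_le_reg_r with e1; auto. unfold Rdiv. rewrite Rmult_assoc, Rinv_l; lra. }
  rewrite Hlam in Hd2.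
  set (al := Ac p - c) in *. set (be := - rr p * Bc p) in *. set (ga := - 2 * rr p * Cc p) in *.
  assert (Hal : al < 0) by (unfold al; lra).
  assert (Hga : 0 <= ga) by (unfold ga; nra).
  assert (Q1 : al + be * e1 + ga * e1 ^ 2 < 0) by (unfold al, be, ga in *; nra).
  assert (Q2 : 0 < al + be * (lam * e1) + ga * (lam * e1) ^ 2) by (unfold al, be, ga in *; nra).
  assert (Q3 : al + be * (lam * e1) + ga * (lam * e1) ^ 2 <=
               (1 - lam) * al + lam * (al + be * e1 + ga * e1 ^ 2)).
  { assert (ga * (lam * e1) ^ 2 <= lam * (ga * e1 ^ 2)).
    { replace (ga * (lam * e1) ^ 2) with (lam * (ga * e1 ^ 2) * lam) by ring.
      assert (0 <= lam * (ga * e1 ^ 2)) by (apply Rmult_le_pos; [lra|]; apply Rmult_le_pos; [lra|]; nra).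
      nra. }
    nra. }
  assert ((1 - lam) * al <= 0) by nra.
  assert (lam * (al + be * e1 + ga * e1 ^ 2) < 0) by nra.
  lra.
Qed.

Theorem theorem3 (p : params) (x1 x2 y1 y2 : R -> R) (E1 E2 : R -> Prop) :
  valid_params p ->
  (* (h1) *) sA p * al1 p - sS p * muS p > 0 ->
  (* (h2) *) sA p * al2 p - sS p * muS p <= 0 ->
  (* (h3) *) x1 0 = 0 -> y1 0 = 0 -> y2 0 = 0 -> -1 < x2 0 < tau p ->
  Mc p > 0 ->
  is_solution p x1 x2 y1 y2 E1 E2 ->
  forall tstart, 0 <= tstart ->
    ~ finite_set (fun t => E1 t /\ tstart < t) /\
    ~ finite_set (fun t => E2 t /\ tstart < t).
Proof.
  intros Hv Ha1 Ha2 hx10 hy10 hy20 hx20 HM Hs tstart Ht0.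
  pose proof Hv as Hv'.
  destruct Hs as (HE1pos & HE2pos & HF1 & HF2 & Hbox & Hybox & Hder & Hc1 & Hc2 & Hrc & Hact1 & Hact2).
  destruct Hv as (HsA & HsS & HsC & HmuS & HmuC & Hr & Htau & Hal1 & Hal2).
  assert (HA1 : 0 < A1c p).
  { unfold A1c. apply Rmult_lt_0_compat; [apply Rmult_lt_0_compat|]; lra. }
  assert (HT : 0 < Tc p).
  { unfold Tc. apply Rdiv_lt_0_compat; [apply atanh_pos; lra|lra]. }
  assert (G1 : forall s, 0 <= s -> exists t,
     s < t <= s + (atanh (tau p) - atanh (x1 s)) / A1c p /\ E1 t).
  { intros s Hs0.
    destruct (Hbox s Hs0) as [Hx1s _].
    assert (HK : 0 < (atanh (tau p) - atanh (x1 s)) / A1c p).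
    { apply Rdiv_lt_0_compat; [|lra]. assert (atanh (x1 s) < atanh (tau p)) by (apply atanh_lt; lra). lra. }
    set (K := (atanh (tau p) - atanh (x1 s)) / A1c p) in *.
    apply NNPP. intros Hno.
    assert (Hno' : forall t, s < t <= s + K -> ~ E1 t) by (intros t Ht HE; apply Hno; eauto).
    set (b := s + K).
    destruct (HF2 b) as [l2 Hl2].
    set (h := fun u => atanh (x1 u) - A1c p * u).
    set (df := fun u => (sA p * al1 p + sS p * (y2 u - muS p)) * sC p * (y2 u + muC p) - A1c p).
    assert (Hcont : forall z, s < z <= b -> continuity_pt h z).
    { intros z Hz. destruct (Hbox z ltac:(lra)) as [Hxz _].
      apply continuity_pt_minus.
      - apply (continuity_pt_comp x1 atanh). apply cont_of_continuous. apply (proj1 (Hc1 z ltac:(lra) ltac:(apply Hno'; unfold b in *; lra))).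
        apply atanh_cont; lra.
      - apply continuity_pt_mult; [apply continuity_pt_const; intros ? ?; reflexivity|apply continuity_pt_id]. }
    assert (Hmono : h s <= h b).
    { apply (mono h df l2 s b); [unfold b; lra| | | |].
      - unfold h. apply (lim_minus (at_right s) (fun u => atanh (x1 u)) (fun u => A1c p * u)).
        + apply (lim_comp_cont (at_right s) atanh x1 (x1 s)); [apply (proj1 (Hrc s Hs0))|apply atanh_cont; lra].
        + apply lim_right_cont. apply continuity_pt_mult; [apply continuity_pt_const; intros ? ?; reflexivity|apply continuity_pt_id].
      - apply lim_left_cont, Hcont. unfold b; lra.
      - intros z Hz; apply Hcont; lra.
      - intros z Hz Hzl.
        assert (HnE2 : ~ E2 z) by (intros HE; apply Hzl, Hl2; split; [auto|lra]).
        assert (HnE1 : ~ E1 z) by (apply Hno'; unfold b in *; lra).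
        destruct (Hder z ltac:(lra) HnE1 HnE2) as [Hdx1 _].
        destruct (Hbox z ltac:(lra)) as [Hxz _].
        destruct (Hybox z ltac:(lra)) as [_ Hyz].
        split.
        + unfold h, df. apply dminus.
          * eapply deq. apply dcomp; [apply atanh_derive; lra|exact Hdx1].
            unfold xrhs. match goal with |- ?a = ?b => change (@eq R a b) end. field. lra.
          * auto_derive; auto; ring.
        + unfold df, A1c. 
          assert (0 <= sS p * (y2 z) * sC p * (y2 z + muC p)).
          { apply Rmult_le_pos; [apply Rmult_le_pos; [apply Rmult_le_pos|]|]; lra. }
          assert (0 <= (sA p * al1 p - sS p * muS p) * sC p * y2 z).
          { apply Rmult_le_pos; [apply Rmult_le_pos|]; lra. }
          nra. }
    unfold h in Hmono.
    destruct (Hbox b ltac:(unfold b; lra)) as [Hxb _].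
    assert (atanh (x1 b) < atanh (tau p)) by (apply atanh_lt; lra).
    assert (A1c p * K = atanh (tau p) - atanh (x1 s)) by (unfold K; field; lra).
    unfold b in *. nra. }
  assert (GF : forall m p0 t, 0 <= m -> (forall z, E2 z -> z <= m) -> m < p0 -> E1 p0 ->
     p0 < t -> (forall z, p0 < z < t -> ~ E1 z) ->
     atanh (x2 t) >= atanh (x2 p0) + Ff p (t - p0)).
  { intros m p0 t Hm0 Hm Hmp HE1p Hpt HnE1.
    assert (HnE2 : forall z, m < z -> ~ E2 z) by (intros z Hz HE; specialize (Hm z HE); lra).
    assert (Hexpc : forall z, continuity_pt (fun w => exp (rr p * (w - p0))) z).
    { intros z. apply derivable_continuous_pt. exists (rr p * exp (rr p * (z - p0))).
      apply is_derive_Reals. auto_derive; auto; unfold Rminus; ring. }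
    assert (Hy : forall u, p0 <= u < t -> y1 u = exp (- rr p * (u - p0))).
    { intros u Hu. destruct (Req_dec u p0) as [->|Hne].
      - replace (- rr p * (p0 - p0)) with 0 by ring. rewrite exp_0. apply Hact1, HE1p.
      - set (Z := fun w => y1 w * exp (rr p * (w - p0))).
        assert (HZ : Z p0 = 1).
        { unfold Z. rewrite (proj2 (proj2 (Hact1 p0 HE1p))). replace (rr p * (p0 - p0)) with 0 by ring.
          rewrite exp_0; ring. }
        assert (Zc : forall z, p0 < z <= u -> continuity_pt Z z).
        { intros z Hz. apply continuity_pt_mult; [|apply Hexpc].
          apply cont_of_continuous. apply (proj2 (Hc1 z ltac:(lra) ltac:(apply HnE1; lra))). }
        assert (Zr : filterlim Z (at_right p0) (locally (Z p0))).
        { apply (lim_mult (at_right p0) y1 (fun w => exp (rr p * (w - p0)))).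
          apply (proj1 (proj2 (proj2 (Hrc p0 ltac:(lra))))). apply (lim_right_cont (fun w => exp (rr p * (w - p0))) p0), Hexpc. }
        assert (Zd : forall z, p0 < z < u -> is_derive Z z 0).
        { intros z Hz.
          assert (Hn1 : ~ E1 z) by (apply HnE1; lra).
          assert (Hn2 : ~ E2 z) by (apply HnE2; lra).
          destruct (Hder z ltac:(lra) Hn1 Hn2) as (_ & _ & Hdy1 & _).
          eapply deq. apply dmult; [exact Hdy1|]. auto_derive; auto.
          match goal with |- ?a = ?b => change (@eq R a b) end. cbv beta. unfold Rminus. ring. }
        assert (Z1 : Z p0 <= Z u).
        { apply (mono Z (fun _ => 0) nil p0 u); [lra|exact Zr| | |].
          - apply lim_left_cont, Zc; lra.
          - intros z Hz; apply Zc; lra.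
          - intros z Hz _. split; [apply Zd; lra|lra]. }
        assert (Z2 : (fun w => 1 - Z w) p0 <= (fun w => 1 - Z w) u).
        { apply (mono (fun w => 1 - Z w) (fun _ => 0) nil p0 u); [lra| | | |].
          - apply (lim_minus (at_right p0) (fun _ => 1) Z). apply filterlim_const. exact Zr.
          - apply (lim_left_cont (fun w => 1 - Z w) u). apply continuity_pt_minus; [apply continuity_pt_const; intros ? ?; reflexivity|apply Zc; lra].
          - intros z Hz. apply continuity_pt_minus; [apply continuity_pt_const; intros ? ?; reflexivity|apply Zc; lra].
          - intros z Hz _. split; [|lra]. eapply deq. apply dminus; [|apply Zd; lra].
            apply is_derive_const. match goal with |- ?a = ?b => change (@eq R a b) end. unfold zero; simpl; ring. }
        simpl in Z2.
        assert (Zu : Z u = 1) by lra.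
        unfold Z in Zu.
        assert (Hee : exp (- rr p * (u - p0)) * exp (rr p * (u - p0)) = 1).
        { rewrite <- exp_plus. replace (- rr p * (u - p0) + rr p * (u - p0)) with 0 by ring. apply exp_0. }
        rewrite <- Hee in Zu. apply Rmult_eq_reg_r in Zu; auto.
        apply Rgt_not_eq, exp_pos. }
    set (W := fun u => atanh (x2 u) - Ff p (u - p0)).
    assert (HFc : forall z, continuity_pt (fun u => Ff p (u - p0)) z).
    { intros z. apply (continuity_pt_comp (fun u => u - p0) (Ff p)).
      apply continuity_pt_minus; [apply continuity_pt_id|apply continuity_pt_const; intros ? ?; reflexivity].
      apply Ff_cont. }
    assert (Wc : forall z, p0 < z <= t -> continuity_pt W z).
    { intros z Hz. destruct (Hbox z ltac:(lra)) as [_ Hxz].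
      apply continuity_pt_minus; [|apply HFc].
      apply (continuity_pt_comp x2 atanh). apply cont_of_continuous.
      apply (proj1 (Hc2 z ltac:(lra) ltac:(apply HnE2; lra))).
      apply atanh_cont; lra. }
    assert (HWm : W p0 <= W t).
    { apply (mono W (fun _ => 0) nil p0 t); [lra| | | |].
      - unfold W. apply (lim_minus (at_right p0) (fun u => atanh (x2 u)) (fun u => Ff p (u - p0))).
        + destruct (Hbox p0 ltac:(lra)) as [_ Hxz].
          apply (lim_comp_cont (at_right p0) atanh x2 (x2 p0)); [apply (proj1 (proj2 (Hrc p0 ltac:(lra))))|apply atanh_cont; lra].
        + apply (lim_right_cont (fun u => Ff p (u - p0)) p0), HFc.
      - apply (lim_left_cont W t), Wc; lra.
      - intros z Hz; apply Wc; lra.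
      - intros z Hz _. split; [|lra].
        assert (Hn1 : ~ E1 z) by (apply HnE1; lra).
        assert (Hn2 : ~ E2 z) by (apply HnE2; lra).
        destruct (Hder z ltac:(lra) Hn1 Hn2) as (_ & Hdx2 & _ & _).
        destruct (Hbox z ltac:(lra)) as [_ Hxz].
        unfold W. eapply deq. apply dminus.
        + apply dcomp; [apply atanh_derive; lra|exact Hdx2].
        + apply (dcomp (Ff p) (fun u => u - p0)); [apply Ff_derive|]. auto_derive; auto.
        + match goal with |- ?a = ?b => change (@eq R a b) end.
          rewrite (Hy z ltac:(lra)). unfold xrhs, Fd, Ac, Bc, Cc. field. lra. }
    unfold W in HWm. replace (p0 - p0) with 0 in HWm by ring. rewrite Ff_0 in HWm. lra. }
  assert (Hmx : forall l : list R, let m := fold_right Rmax tstart l in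
     0 <= m /\ tstart <= m /\ forall z, In z l -> z <= m).
  { intros l. cbv zeta. pose proof (fold_max_ge0 l tstart). split; [lra|split; [lra|]].
    intros z Hz. apply fold_max_ge, Hz. }
  split.
  - intros [l Hl]. destruct (Hmx l) as (Hm0 & Hmt & Hml).
    set (m := fold_right Rmax tstart l) in *.
    destruct (G1 m Hm0) as [t [Ht HE]].
    assert (t <= m) by (apply Hml, Hl; split; [auto|lra]). lra.
  - intros [l Hl]. destruct (Hmx l) as (Hm0 & Hmt & Hml).
    set (m := fold_right Rmax tstart l) in *.
    assert (Hm : forall z, E2 z -> z <= m).
    { intros z Hz. destruct (Rle_or_lt z tstart); [lra|]. apply Hml, Hl; auto. }
    destruct (G1 m Hm0) as [s0 [Hs0 HEs0]].
    set (c := Mc p / Tc p).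
    assert (Hc : 0 < c) by (unfold c; apply Rdiv_lt_0_compat; lra).
    assert (Q : forall n (l' : list R) t, (length l' <= n)%nat ->
       (forall z, E1 z -> s0 <= z <= t -> In z l') -> E1 t -> s0 <= t ->
       atanh (x2 t) >= atanh (x2 s0) + c * (t - s0)).
    { induction n as [|n IH]; intros l' t Hlen Hcov HEt Hst.
      - destruct l'; [|simpl in Hlen; lia]. destruct (Hcov t HEt ltac:(lra)).
      - destruct (Req_dec t s0) as [->|Hne]; [lra|].
        destruct (fin_max l' (fun z => E1 z /\ s0 <= z < t)) as [q [[HEq Hq] Hqmax]].
        { exists s0. split; [auto|lra]. }
        { intros z [Hz1 Hz2]. apply Hcov; auto; lra. }
        assert (HIH : atanh (x2 q) >= atanh (x2 s0) + c * (q - s0)).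
        { apply (IH (remove Req_EM_T t l')); auto; try lra.
          - pose proof (remove_length_lt Req_EM_T l' t (Hcov t HEt ltac:(lra))). lia.
          - intros z Hz Hz'. apply in_in_remove; [lra|]. apply Hcov; auto; lra. }
        destruct (G1 q ltac:(lra)) as [t' [Ht' HEt']].
        rewrite (proj1 (proj2 (Hact1 q HEq))), atanh_0, Rminus_0_r in Ht'.
        fold (Tc p) in Ht'.
        assert (Htt' : t <= t').
        { destruct (Rle_or_lt t t'); auto.
          assert (t' <= q) by (apply Hqmax; split; [auto|lra]). lra. }
        assert (HnE1 : forall z, q < z < t -> ~ E1 z).
        { intros z Hz HEz. assert (z <= q) by (apply Hqmax; split; [auto|lra]). lra. }
        pose proof (GF m q t Hm0 Hm ltac:(lra) HEq ltac:(lra) HnE1) as HG.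
        pose proof (Fineq p Hv' Ha2 HT HM (t - q) ltac:(lra)) as HFi.
        fold c in HFi. nra. }
    set (N := s0 + (atanh (tau p) - atanh (x2 s0)) / c + 1).
    assert (HN0 : 0 <= N).
    { destruct (Hbox s0 ltac:(lra)) as [_ Hx].
      assert (atanh (x2 s0) < atanh (tau p)) by (apply atanh_lt; lra).
      assert (0 < (atanh (tau p) - atanh (x2 s0)) / c) by (apply Rdiv_lt_0_compat; lra).
      unfold N; lra. }
    destruct (G1 N HN0) as [t [Ht HEt]].
    destruct (HF1 t) as [l1 Hl1].
    assert (HQ := Q (length l1) l1 t (le_n _) ltac:(intros z Hz Hz'; apply Hl1; split; [auto|lra]) HEt).
    destruct (Hbox s0 ltac:(lra)) as [_ Hx0].
    assert (atanh (x2 s0) < atanh (tau p)) by (apply atanh_lt; lra).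
    assert (HcN : c * (N - s0) = atanh (tau p) - atanh (x2 s0) + c) by (unfold N; field; lra).
    assert (HtN : s0 <= t) by (unfold N in *; assert (0 < (atanh (tau p) - atanh (x2 s0)) / c) by (apply Rdiv_lt_0_compat; lra); lra).
    specialize (HQ HtN).
    destruct (Hbox t ltac:(lra)) as [_ Hxt].
    assert (atanh (x2 t) < atanh (tau p)) by (apply atanh_lt; lra).
    assert (c * (t - s0) >= c * (N - s0)) by (apply Rmult_ge_compat_l; lra).
    lra.
Qed.
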